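(* Let $X$ be a topological space in which every open set is a union of countably many clopen sets. Then $X$ is hereditarily Hurewicz (i.e., every subspace of $X$ satisfies $\mathsf{U}_{fin}(\mathrm{O},\Gamma)$) if, and only if, for every continuous map $\Psi:X\to\mathrm{EF}$, the image $\Psi[X]$ is bounded.
   Context: A cover $\mathcal{U}$ of a space $Y$ is point-cofinite if it is infinite and each point of $Y$ belongs to all but finitely many members of $\mathcal{U}$. A space $Y$ satisfies $\mathsf{U}_{fin}(\mathrm{O},\Gamma)$ (the Hurewicz property) if whenever $\mathcal{U}_1,\mathcal{U}_2,\dots$ are countable open covers of $Y$ none of which contains a finite subcover, there are finite sets $\mathcal{F}_n\subseteq\mathcal{U}_n$ such that $\{\bigcup\mathcal{F}_n:n\in\mathbb{N}\}$ is a point-cofinite cover of $Y$. Let $\overline{\mathbb{N}}=\mathbb{N}\cup\{\infty\}$ be the one-point compactification of $\mathbb{N}$, and give $\overline{\mathbb{N}}^{\mathbb{N}}$ the product topology. $\mathrm{EF}$ is the subspace of $\overline{\mathbb{N}}^{\mathbb{N}}$ of eventually finite elements, i.e., those $f$ for which there is $m$ with $f(n)<\infty$ for all $n\ge m$. For $f\in\mathrm{EF}$ and $g\in\mathbb{N}^{\mathbb{N}}$, $f\le^* g$ means $f(n)\le g(n)$ for all but finitely many $n$. A set $Y\subseteq\mathrm{EF}$ is bounded if there is $g\in\mathbb{N}^{\mathbb{N}}$ with $f\le^*g$ for all $f\in Y$. *)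

(* Defs.v *)
From Stdlib Require Import List Arith.
Import ListNotations.

Definition is_topology {T : Type} (op : (T -> Prop) -> Prop) : Prop :=
  op (fun _ => True) /\
  (forall F : (T -> Prop) -> Prop, (forall U, F U -> op U) ->
     op (fun x => exists U, F U /\ U x)) /\
  (forall U V, op U -> op V -> op (fun x => U x /\ V x)).

Definition subspace_open {T : Type} (op : (T -> Prop) -> Prop) (Y : T -> Prop)
  : ({x : T | Y x} -> Prop) -> Prop :=
  fun W => exists U, op U /\ forall y : {x : T | Y x}, W y <-> U (proj1_sig y).

Definition continuous {A B : Type} (opA : (A -> Prop) -> Prop)
  (opB : (B -> Prop) -> Prop) (f : A -> B) : Prop :=
  forall V, opB V -> opA (fun x => V (f x)).

Definition clopen {T : Type} (op : (T -> Prop) -> Prop) (C : T -> Prop) : Prop :=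
  op C /\ op (fun x => ~ C x).

Definition open_countable_union_clopen {T : Type} (op : (T -> Prop) -> Prop) : Prop :=
  forall U, op U -> exists C : nat -> (T -> Prop),
    (forall n, clopen op (C n)) /\ (forall x, U x <-> exists n, C n x).

Definition finite_family {T : Type} (S : (T -> Prop) -> Prop) : Prop :=
  exists l : list (T -> Prop), forall W, S W -> In W l.

Definition point_cofinite_cover {T : Type} (S : (T -> Prop) -> Prop) : Prop :=
  (forall y : T, exists W, S W /\ W y) /\
  ~ finite_family S /\
  (forall y : T, finite_family (fun W => S W /\ ~ W y)).

Definition open_cover_seq {T : Type} (op : (T -> Prop) -> Prop) (u : nat -> (T -> Prop)) : Prop :=
  (forall n, op (u n)) /\ (forall y, exists n, u n y).

Definition in_range {T : Type} (u : nat -> (T -> Prop)) (W : T -> Prop) : Prop :=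
  exists n, u n = W.

Definition no_finite_subcover {T : Type} (u : nat -> (T -> Prop)) : Prop :=
  forall l : list (T -> Prop), (forall W, In W l -> in_range u W) ->
    exists y, forall W, In W l -> ~ W y.

Definition union_list {T : Type} (l : list (T -> Prop)) : T -> Prop :=
  fun y => exists W, In W l /\ W y.

Definition Hurewicz {T : Type} (op : (T -> Prop) -> Prop) : Prop :=
  forall u : nat -> nat -> (T -> Prop),
    (forall k, open_cover_seq op (u k) /\ no_finite_subcover (u k)) ->
    exists F : nat -> list (T -> Prop),
      (forall k W, In W (F k) -> in_range (u k) W) /\
      point_cofinite_cover (fun W => exists k, W = union_list (F k)).

Definition hereditarily_Hurewicz {T : Type} (op : (T -> Prop) -> Prop) : Prop :=
  forall Y : T -> Prop, Hurewicz (subspace_open op Y).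

(** Nbar = N ∪ {∞}, with None = ∞; one-point compactification of discrete N. *)
Definition Nbar := option nat.

Definition Nbar_open (U : Nbar -> Prop) : Prop :=
  U None -> exists m, forall n, m <= n -> U (Some n).

(** Product topology on Nbar^N: U is open iff each point of U has a basic
    neighbourhood (finite intersection of open cylinders) inside U. *)
Definition prod_open (U : (nat -> Nbar) -> Prop) : Prop :=
  forall f, U f -> exists l : list (nat * (Nbar -> Prop)),
    (forall p, In p l -> Nbar_open (snd p) /\ snd p (f (fst p))) /\
    (forall g, (forall p, In p l -> snd p (g (fst p))) -> U g).

Definition eventually_finite (f : nat -> Nbar) : Prop :=
  exists m, forall n, m <= n -> f n <> None.

Definition EF := {f : nat -> Nbar | eventually_finite f}.

Definition EF_open : (EF -> Prop) -> Prop := subspace_open prod_open eventually_finite.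

Definition Nbar_le (a : Nbar) (b : nat) : Prop :=
  match a with Some k => k <= b | None => False end.

Definition le_star (f : nat -> Nbar) (g : nat -> nat) : Prop :=
  exists m, forall n, m <= n -> Nbar_le (f n) (g n).

Definition bounded (Y : EF -> Prop) : Prop :=
  exists g : nat -> nat, forall f, Y f -> le_star (proj1_sig f) g.

(* Main.v *)
Require Import Defs.
From Stdlib Require Import List Arith Lia Classical ClassicalEpsilon FunctionalExtensionality PropExtensionality Cantor.
Import ListNotations.

Lemma pred_ext {T} (A B : T -> Prop) : (forall x, A x <-> B x) -> A = B.
Proof. intro H; apply functional_extensionality; intro x; apply propositional_extensionality; auto. Qed.

Lemma op_ext {T} (op : (T->Prop)->Prop) (A B : T -> Prop) :
  (forall x, A x <-> B x) -> op A -> op B.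
Proof. intros H; rewrite (pred_ext A B H); auto. Qed.

Lemma choice2 {A B} (R : A -> B -> Prop) : (forall a, exists b, R a b) -> exists f, forall a, R a (f a).
Proof.
  intros H. exists (fun a => proj1_sig (constructive_indefinite_description _ (H a))).
  intro a. exact (proj2_sig (constructive_indefinite_description _ (H a))).
Qed.

Lemma op_local {T} (op : (T->Prop)->Prop) (Htop : is_topology op) (A : T -> Prop) :
  (forall x, A x -> exists N, op N /\ N x /\ forall z, N z -> A z) -> op A.
Proof.
  intros H. destruct Htop as [_ [Hu _]].
  apply (op_ext op (fun x => exists U, (op U /\ forall z, U z -> A z) /\ U x)).
  - intro x; split.
    + intros [U [[_ HU] Ux]]; auto.
    + intros Ax. destruct (H x Ax) as [N [? [? ?]]]. exists N; auto.
  - apply Hu. intros U [? _]; auto.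
Qed.

Lemma op_and {T} (op : (T->Prop)->Prop) (Htop : is_topology op) (A B : T -> Prop) :
  op A -> op B -> op (fun x => A x /\ B x).
Proof. destruct Htop as [_ [_ Hi]]. auto. Qed.

Lemma op_or {T} (op : (T->Prop)->Prop) (Htop : is_topology op) (A B : T -> Prop) :
  op A -> op B -> op (fun x => A x \/ B x).
Proof.
  intros HA HB. apply op_local; auto. intros x [H|H].
  - exists A; auto.
  - exists B; auto.
Qed.

Lemma op_const {T} (op : (T->Prop)->Prop) (Htop : is_topology op) (P : Prop) :
  op (fun _ : T => P).
Proof.
  destruct (classic P) as [HP|HP].
  - apply (op_ext op (fun _ => True)). { intros; tauto. } apply Htop.
  - apply op_local; auto. intros x Hx; contradiction.
Qed.

Definition cl {T} (op : (T->Prop)->Prop) (P : T -> Prop) := op P /\ op (fun x => ~ P x).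

Lemma cl_ext {T} (op : (T->Prop)->Prop) (A B : T -> Prop) :
  (forall x, A x <-> B x) -> cl op A -> cl op B.
Proof.
  intros H [H1 H2]; split.
  - apply (op_ext op A); auto.
  - apply (op_ext op (fun x => ~ A x)); auto. intro x; specialize (H x); tauto.
Qed.

Lemma cl_not {T} (op : (T->Prop)->Prop) (A : T -> Prop) : cl op A -> cl op (fun x => ~ A x).
Proof.
  intros [H1 H2]; split; auto. apply (op_ext op A); auto. intro x; split; [tauto|apply NNPP].
Qed.

Lemma cl_and {T} (op : (T->Prop)->Prop) (Htop : is_topology op) (A B : T -> Prop) :
  cl op A -> cl op B -> cl op (fun x => A x /\ B x).
Proof.
  intros [A1 A2] [B1 B2]; split.
  - apply op_and; auto.
  - apply (op_ext op (fun x => ~ A x \/ ~ B x)). { intro x; tauto. } apply op_or; auto.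
Qed.

Lemma cl_or {T} (op : (T->Prop)->Prop) (Htop : is_topology op) (A B : T -> Prop) :
  cl op A -> cl op B -> cl op (fun x => A x \/ B x).
Proof.
  intros [A1 A2] [B1 B2]; split.
  - apply op_or; auto.
  - apply (op_ext op (fun x => ~ A x /\ ~ B x)). { intro x; tauto. } apply op_and; auto.
Qed.

Lemma cl_const {T} (op : (T->Prop)->Prop) (Htop : is_topology op) (P : Prop) :
  cl op (fun _ : T => P).
Proof. split; apply op_const; auto. Qed.

Lemma cl_forall_lt {T} (op : (T->Prop)->Prop) (Htop : is_topology op) (P : nat -> T -> Prop) n :
  (forall i, i < n -> cl op (P i)) -> cl op (fun x => forall i, i < n -> P i x).
Proof.
  induction n; intros H.
  - apply (cl_ext op (fun _ => True)). { intro x; split; intros; [lia|auto]. } apply cl_const; auto.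
  - apply (cl_ext op (fun x => (forall i, i < n -> P i x) /\ P n x)).
    + intro x; split.
      * intros [H1 H2] i Hi. destruct (Nat.eq_dec i n); [subst; auto|apply H1; lia].
      * intros H1; split; auto.
    + apply cl_and; auto.
Qed.

Lemma cl_exists_lt {T} (op : (T->Prop)->Prop) (Htop : is_topology op) (P : nat -> T -> Prop) n :
  (forall i, i < n -> cl op (P i)) -> cl op (fun x => exists i, i < n /\ P i x).
Proof.
  intros H. apply (cl_ext op (fun x => ~ forall i, i < n -> ~ P i x)).
  - intro x; split.
    + intros H1. apply NNPP; intro H2; apply H1; intros i Hi Hp; apply H2; eauto.
    + intros [i [Hi Hp]] H1; eapply H1; eauto.
  - apply cl_not. apply cl_forall_lt; auto. intros; apply cl_not; auto.
Qed.

Definition contN {X} (op : (X->Prop)->Prop) (h : X -> Nbar) :=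
  forall O, Nbar_open O -> op (fun x => O (h x)).

Lemma contN_ite {X} (op : (X->Prop)->Prop) (Htop : is_topology op) (A : X -> Prop)
  (h h1 h2 : X -> Nbar) : cl op A -> contN op h1 -> contN op h2 ->
  (forall x, A x -> h x = h1 x) -> (forall x, ~ A x -> h x = h2 x) -> contN op h.
Proof.
  intros [HA1 HA2] C1 C2 E1 E2 O HO. apply op_local; auto. intros x Hx.
  destruct (classic (A x)) as [Ax|Ax].
  - exists (fun z => A z /\ O (h1 z)); repeat split; auto.
    + apply op_and; auto.
    + rewrite <- E1; auto.
    + intros z [Az Oz]; rewrite E1; auto.
  - exists (fun z => ~ A z /\ O (h2 z)); repeat split; auto.
    + apply op_and; auto.
    + rewrite <- E2; auto.
    + intros z [Az Oz]; rewrite E2; auto.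
Qed.

Lemma contN_const {X} (op : (X->Prop)->Prop) (Htop : is_topology op) c : contN op (fun _ => c).
Proof. intros O _. apply op_const; auto. Qed.

Lemma prod_preimage {X} (op : (X->Prop)->Prop) (Htop : is_topology op) (psi : X -> nat -> Nbar) :
  (forall c, contN op (fun x => psi x c)) -> forall U, prod_open U -> op (fun x => U (psi x)).
Proof.
  intros Hc U HU. apply op_local; auto. intros x Hx.
  destruct (HU _ Hx) as [l [Hl1 Hl2]].
  exists (fun z => forall p, In p l -> snd p (psi z (fst p))). repeat split.
  - clear Hl2. induction l as [|a l IH].
    + apply (op_ext op (fun _ => True)). { intro z; split; intros; [contradiction|auto]. } apply Htop.
    + apply (op_ext op (fun z => snd a (psi z (fst a)) /\ forall p, In p l -> snd p (psi z (fst p)))).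
      * intro z; split.
        -- intros [H1 H2] p [E|Hp]; [subst p; exact H1|auto].
        -- intros H; split; [apply H; left; reflexivity|intros p Hp; apply H; right; exact Hp].
      * apply op_and; auto.
        -- apply Hc. apply Hl1; left; auto.
        -- apply IH. intros; apply Hl1; right; auto.
  - intros p Hp; apply Hl1; auto.
  - intros z Hz; apply Hl2; auto.
Qed.

Lemma least_ex (P : nat -> Prop) : (exists j, P j) -> exists j, P j /\ forall i, i < j -> ~ P i.
Proof.
  intros [j Hj]. apply NNPP; intro Hn.
  assert (forall n, forall i, i <= n -> ~ P i) as H.
  { induction n; intros i Hi Pi.
    - apply Hn. exists i; split; auto. intros; lia.
    - destruct (Nat.eq_dec i (S n)).
      + subst. apply Hn. exists (S n); split; auto. intros i' Hi'; apply IHn; lia.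
      + apply (IHn i); auto; lia. }
  apply (H j j); auto.
Qed.

Definition phi {X} (D : nat -> nat -> X -> Prop) (k : nat) (x : X) : Nbar :=
  match excluded_middle_informative (exists j, D k j x) with
  | left H => Some (proj1_sig (constructive_indefinite_description _ (least_ex _ H)))
  | right _ => None
  end.

Lemma phi_None {X} (D : nat -> nat -> X -> Prop) k x : phi D k x = None <-> forall j, ~ D k j x.
Proof.
  unfold phi. destruct excluded_middle_informative as [H|H].
  - split; [discriminate|]. intros H'. destruct H as [j Hj]. exfalso; eapply H'; eauto.
  - split; auto. intros _ j Hj; apply H; eauto.
Qed.

Lemma phi_Some {X} (D : nat -> nat -> X -> Prop) k x j :
  phi D k x = Some j <-> (D k j x /\ forall i, i < j -> ~ D k i x).
Proof.
  unfold phi. destruct excluded_middle_informative as [H|H].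
  - destruct (constructive_indefinite_description _ _) as [j0 [H1 H2]]; simpl.
    split.
    + intros E; injection E; intros; subst; auto.
    + intros [H3 H4]. f_equal.
      destruct (Nat.lt_trichotomy j0 j) as [?|[?|?]]; auto.
      * exfalso; eapply H4; eauto.
      * exfalso; eapply H2; eauto.
  - split; [discriminate|]. intros [H1 _]; exfalso; apply H; eauto.
Qed.

Lemma phi_le {X} (D : nat -> nat -> X -> Prop) k x t :
  Nbar_le (phi D k x) t <-> exists j, j < S t /\ D k j x.
Proof.
  split.
  - destruct (phi D k x) as [j|] eqn:E; simpl; [|contradiction].
    intros Hj. apply (proj1 (phi_Some _ _ _ _)) in E. exists j; split; [lia|apply E].
  - intros [j [Hj Dj]]. destruct (phi D k x) as [j0|] eqn:E; simpl.
    + apply (proj1 (phi_Some _ _ _ _)) in E. destruct E as [_ E].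
      destruct (Nat.lt_ge_cases j j0); [exfalso; eapply E; eauto|lia].
    + exact (proj1 (phi_None D k x) E j Dj).
Qed.

Definition clD {X} (op : (X->Prop)->Prop) (D : nat -> nat -> X -> Prop) := forall k j, cl op (D k j).

Lemma phi_cont {X} (op : (X->Prop)->Prop) (Htop : is_topology op) D (HD : clD op D) k :
  contN op (phi D k).
Proof.
  intros O HO. apply op_local; auto. intros x Hx.
  destruct (phi D k x) as [j|] eqn:E.
  - exists (fun z => D k j z /\ forall i, i < j -> ~ D k i z). repeat split.
    + apply cl_and; auto. apply cl_forall_lt; auto. intros; apply cl_not; auto.
    + apply (proj1 (phi_Some _ _ _ _)) in E; apply E.
    + apply (proj1 (phi_Some _ _ _ _)) in E; apply E.
    + intros z Hz. rewrite (proj2 (phi_Some D k z j) Hz); auto.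
  - destruct (HO Hx) as [M HM].
    exists (fun z => forall i, i < M -> ~ D k i z). repeat split.
    + apply cl_forall_lt; auto. intros; apply cl_not; auto.
    + intros i _; rewrite phi_None in E; apply E.
    + intros z Hz. destruct (phi D k z) as [j'|] eqn:E'; auto.
      apply (proj1 (phi_Some _ _ _ _)) in E'. apply HM.
      destruct (Nat.lt_ge_cases j' M); auto. exfalso; eapply Hz; eauto. apply E'.
Qed.

Definition LE {X} (D : nat -> nat -> X -> Prop) k t x := forall i, i < k -> Nbar_le (phi D i x) t.
Definition AA {X} (D : nat -> nat -> X -> Prop) k t x := LE D k t x /\ (t = 0 \/ ~ LE D k (t-1) x).

Lemma LE_cl {X} (op : (X->Prop)->Prop) (Htop : is_topology op) D (HD : clD op D) k t :
  cl op (LE D k t).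
Proof.
  apply (cl_ext op (fun x => forall i, i < k -> exists j, j < S t /\ D i j x)).
  - intro x; unfold LE; split; intros H i Hi; apply phi_le; auto.
  - apply cl_forall_lt; auto. intros; apply cl_exists_lt; auto.
Qed.

Lemma AA_cl {X} (op : (X->Prop)->Prop) (Htop : is_topology op) D (HD : clD op D) k t :
  cl op (AA D k t).
Proof.
  apply cl_and; auto. apply LE_cl; auto. apply cl_or; auto. apply cl_const; auto.
  apply cl_not; apply LE_cl; auto.
Qed.

Lemma Nbar_le_mono a t t' : t <= t' -> Nbar_le a t -> Nbar_le a t'.
Proof. destruct a; simpl; auto; lia. Qed.

Lemma AA_uniq {X} (D : nat -> nat -> X -> Prop) k t t' x : AA D k t x -> AA D k t' x -> t = t'.
Proof.
  assert (forall t t', t < t' -> AA D k t x -> AA D k t' x -> False) as H.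
  { intros a b Hab [Ha _] [_ [Hb|Hb]]; [lia|]. apply Hb. intros i Hi.
    apply (Nbar_le_mono _ a); auto; lia. }
  intros H1 H2. destruct (Nat.lt_trichotomy t t') as [?|[?|?]]; auto; exfalso; eauto.
Qed.

Definition psi {X} (D : nat -> nat -> X -> Prop) (x : X) (c : nat) : Nbar :=
  if excluded_middle_informative (AA D (fst (of_nat c)) (snd (of_nat c)) x)
  then phi D (fst (of_nat c)) x else Some 0.

Lemma psi_None {X} (D : nat -> nat -> X -> Prop) x c :
  psi D x c = None -> AA D (fst (of_nat c)) (snd (of_nat c)) x /\ phi D (fst (of_nat c)) x = None.
Proof.
  unfold psi. destruct excluded_middle_informative; auto. discriminate.
Qed.

Lemma psi_EF {X} (D : nat -> nat -> X -> Prop) x : eventually_finite (psi D x).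
Proof.
  destruct (classic (exists c0, psi D x c0 = None)) as [[c0 H0]|H0].
  - exists (S c0). intros c Hc Hn.
    apply psi_None in H0. apply psi_None in Hn.
    destruct (of_nat c) as [k t] eqn:E. destruct (of_nat c0) as [k0 t0] eqn:E0. simpl in *.
    destruct H0 as [A0 P0]. destruct Hn as [A1 P1].
    assert (k = k0).
    { destruct (Nat.lt_trichotomy k k0) as [?|[?|?]]; auto; exfalso.
      - destruct A0 as [L _]. specialize (L k H). rewrite P1 in L. exact L.
      - destruct A1 as [L _]. specialize (L k0 H). rewrite P0 in L. exact L. }
    subst k0. assert (t = t0) by (eapply AA_uniq; eauto). subst t0.
    assert (c = c0).
    { rewrite <- (cancel_to_of c), <- (cancel_to_of c0), E, E0. auto. }
    lia.
  - exists 0. intros c _ Hc. apply H0; eauto.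
Qed.

Lemma psi_cont {X} (op : (X->Prop)->Prop) (Htop : is_topology op) D (HD : clD op D) c :
  contN op (fun x => psi D x c).
Proof.
  apply (contN_ite op Htop (AA D (fst (of_nat c)) (snd (of_nat c))) _ (phi D (fst (of_nat c))) (fun _ => Some 0)).
  - apply AA_cl; auto.
  - apply phi_cont; auto.
  - apply contN_const; auto.
  - intros x H; unfold psi; destruct excluded_middle_informative; tauto.
  - intros x H; unfold psi; destruct excluded_middle_informative; tauto.
Qed.

Definition PsiD {X} (D : nat -> nat -> X -> Prop) (x : X) : EF := exist _ (psi D x) (psi_EF D x).

Lemma PsiD_cont {X} (op : (X->Prop)->Prop) (Htop : is_topology op) D (HD : clD op D) :
  continuous op EF_open (PsiD D).
Proof.
  intros V [U [HU HV]].
  apply (op_ext op (fun x => U (psi D x))).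
  - intro x. rewrite HV. simpl. tauto.
  - apply prod_preimage; auto. intros; apply psi_cont; auto.
Qed.

Fixpoint maxr (f : nat -> nat) (n : nat) : nat :=
  match n with 0 => f 0 | S n => Nat.max (maxr f n) (f (S n)) end.

Lemma maxr_ge f n i : i <= n -> f i <= maxr f n.
Proof.
  induction n; intros H; simpl.
  - assert (i = 0) by lia; subst; lia.
  - destruct (Nat.eq_dec i (S n)); [subst; lia|]. specialize (IHn ltac:(lia)); lia.
Qed.

Lemma maxr_mono f n n' : n <= n' -> maxr f n <= maxr f n'.
Proof. induction 1; simpl; lia. Qed.

Definition Hh (g : nat -> nat) k s := maxr (fun s' => g (to_nat (k, s'))) s.
Definition step (g : nat -> nat) k s := Nat.max s (Hh g k s).
Fixpoint Q (g : nat -> nat) K c n := match n with 0 => c | S n => step g (K+n) (Q g K c n) end.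
Definition G (g : nat -> nat) k := maxr (fun K => maxr (fun c => Q g K c (k - K)) k) k.
Definition Gsel (g : nat -> nat) k := Hh g k (G g k).

Lemma step_mono g k s s' : s <= s' -> step g k s <= step g k s'.
Proof. intros H. unfold step, Hh. pose proof (maxr_mono (fun s' => g (to_nat (k, s'))) _ _ H). lia. Qed.

Fixpoint bseq (v : nat -> nat) k := match k with 0 => 0 | S k => Nat.max (bseq v k) (v k) end.

Lemma bseq_ge v k i : i < k -> v i <= bseq v k.
Proof. induction k; intros H; simpl; [lia|]. destruct (Nat.eq_dec i k); [subst; lia|]. specialize (IHk ltac:(lia)); lia. Qed.

Lemma bseq_attain v k : bseq v k = 0 \/ exists i, i < k /\ bseq v k = v i.
Proof.
  induction k; simpl; auto.
  destruct (Nat.le_ge_cases (bseq v k) (v k)).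
  - right; exists k; split; lia.
  - destruct IHk as [E|[i [Hi E]]]; [left; lia|right; exists i; split; lia].
Qed.

Lemma bound_core (g : nat -> nat) (v : nat -> nat) M :
  (forall k, M <= k -> v k <= g (to_nat (k, bseq v k))) ->
  forall k, M + bseq v M <= k -> v k <= Gsel g k.
Proof.
  intros Hv.
  assert (forall n, bseq v (M + n) <= Q g M (bseq v M) n) as HQ.
  { induction n; simpl; [rewrite Nat.add_0_r; lia|].
    rewrite Nat.add_succ_r. simpl.
    eapply Nat.le_trans; [|apply (step_mono _ _ _ _ IHn)].
    unfold step, Hh. specialize (Hv (M+n) ltac:(lia)).
    pose proof (maxr_ge (fun s' => g (to_nat (M+n, s'))) (bseq v (M+n)) (bseq v (M+n)) (le_n _)).
    cbv beta in H. lia. }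
  intros k Hk.
  assert (bseq v k <= G g k) as HG.
  { specialize (HQ (k - M)). replace (M + (k - M)) with k in HQ by lia.
    eapply Nat.le_trans; [exact HQ|]. unfold G.
    eapply Nat.le_trans; [|apply (maxr_ge (fun K => maxr (fun c => Q g K c (k - K)) k) k M); lia].
    apply (maxr_ge (fun c => Q g M c (k - M)) k (bseq v M)). lia. }
  unfold Gsel, Hh. specialize (Hv k ltac:(lia)).
  pose proof (maxr_ge (fun s' => g (to_nat (k, s'))) (G g k) (bseq v k) HG). cbv beta in H. lia.
Qed.

Lemma psi_bound {X} (D : nat -> nat -> X -> Prop) (g : nat -> nat) x :
  le_star (psi D x) g -> (forall k, exists j, D k j x) ->
  exists K, forall k, K <= k -> Nbar_le (phi D k x) (Gsel g k).
Proof.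
  intros [M HM] Hx.
  set (v := fun k => match phi D k x with Some n => n | None => 0 end).
  assert (Ev : forall k, phi D k x = Some (v k)).
  { intro k. unfold v. destruct (phi D k x) eqn:E; auto.
    destruct (Hx k) as [j Hj]. rewrite phi_None in E. exfalso; exact (E j Hj). }
  assert (HA : forall k, AA D k (bseq v k) x).
  { intro k. split.
    - intros i Hi. rewrite Ev. simpl. apply bseq_ge; auto.
    - destruct (bseq_attain v k) as [E|[i [Hi E]]]; [left; auto|].
      destruct (bseq v k) as [|b] eqn:Eb; [left; auto|right].
      intros HL. specialize (HL i Hi). rewrite Ev in HL. simpl in HL. lia. }
  assert (Hv : forall k, M <= k -> v k <= g (to_nat (k, bseq v k))).
  { intros k Hk. pose proof (to_nat_non_decreasing k (bseq v k)).
    specialize (HM (to_nat (k, bseq v k)) ltac:(lia)).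
    unfold psi in HM. rewrite cancel_of_to in HM. simpl in HM.
    destruct excluded_middle_informative as [_|n]; [|exfalso; apply n; apply HA].
    rewrite Ev in HM. exact HM. }
  exists (M + bseq v M). intros k Hk. rewrite Ev. simpl. apply (bound_core g v M Hv k Hk).
Qed.

Lemma pigeon {A} (T : nat -> A) : forall l N0, (forall k, N0 <= k -> In (T k) l) ->
  exists W, In W l /\ forall N, exists k, N <= k /\ T k = W.
Proof.
  induction l as [|a l IH]; intros N0 H.
  - exfalso; exact (H N0 (le_n _)).
  - destruct (classic (forall N, exists k, N <= k /\ T k = a)) as [Ha|Ha].
    + exists a; split; [left; auto|auto].
    + apply not_all_ex_not in Ha. destruct Ha as [N HN].
      destruct (IH (Nat.max N0 N)) as [W [HW1 HW2]].
      * intros k Hk. destruct (H k ltac:(lia)) as [E|E]; auto.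
        exfalso; apply HN; exists k; split; auto; lia.
      * exists W; split; [right|]; auto.
Qed.

Lemma eventual_pcc {T} (u : nat -> nat -> (T -> Prop)) (F : nat -> list (T -> Prop)) :
  (forall k, no_finite_subcover (u k)) -> (forall k W, In W (F k) -> in_range (u k) W) ->
  (forall y, exists K, forall k, K <= k -> union_list (F k) y) ->
  point_cofinite_cover (fun W => exists k, W = union_list (F k)).
Proof.
  intros Hn Hr He. split; [|split].
  - intros y. destruct (He y) as [K HK]. exists (union_list (F K)); split; eauto.
  - intros [l Hl].
    destruct (pigeon (fun k => union_list (F k)) l 0) as [W [_ HW]].
    { intros k _. apply Hl; eauto. }
    destruct (HW 0) as [k1 [_ E1]].
    destruct (Hn k1 (F k1)) as [y Hy]; [apply Hr|].
    destruct (He y) as [K HK]. destruct (HW K) as [k [Hk Ek]].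
    specialize (HK k Hk). rewrite Ek, <- E1 in HK.
    destruct HK as [W' [HW' W'y]]. exact (Hy W' HW' W'y).
  - intros y. destruct (He y) as [K HK].
    exists (map (fun k => union_list (F k)) (seq 0 K)).
    intros W [[k Ek] HWy]. subst W. apply (in_map (fun k => union_list (F k))). apply in_seq.
    destruct (Nat.lt_ge_cases k K); [lia|]. exfalso; apply HWy; auto.
Qed.

Lemma backward (X : Type) (op : (X -> Prop) -> Prop)
  (Htop : is_topology op) (Hclop : open_countable_union_clopen op) :
  (forall Psi : X -> EF, continuous op EF_open Psi ->
     bounded (fun f => exists x, Psi x = f)) -> hereditarily_Hurewicz op.
Proof.
  intros Hb Y u Hu.
  destruct (choice2 (fun (p : nat * nat) (U : X -> Prop) =>
     op U /\ forall y, u (fst p) (snd p) y <-> U (proj1_sig y))) as [Uf HUf].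
  { intros [k n]. destruct (Hu k) as [[Ho _] _]. apply Ho. }
  destruct (choice2 (fun (p : nat * nat) (C : nat -> X -> Prop) =>
     (forall n, clopen op (C n)) /\ forall x, Uf p x <-> exists n, C n x)) as [Cf HCf].
  { intros p. apply Hclop. apply HUf. }
  set (D := fun k j => Cf (k, fst (of_nat j)) (snd (of_nat j))).
  assert (HD : clD op D). { intros k j. apply HCf. }
  destruct (Hb (PsiD D) (PsiD_cont op Htop D HD)) as [g Hg].
  set (F := fun k => map (fun j => u k (fst (of_nat j))) (seq 0 (S (Gsel g k)))).
  exists F.
  split.
  - intros k W HW. unfold F in HW. apply in_map_iff in HW. destruct HW as [j [E _]]. exists (fst (of_nat j)); auto.
  - apply (eventual_pcc u F).
    + intro k; apply Hu.
    + intros k W HW. unfold F in HW. apply in_map_iff in HW. destruct HW as [j [E _]]. exists (fst (of_nat j)); auto.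
    + intros y. set (x := proj1_sig y).
      assert (Hle : le_star (psi D x) g).
      { apply (Hg (PsiD D x)). exists x; auto. }
      assert (Hx : forall k, exists j, D k j x).
      { intros k. destruct (Hu k) as [[_ Hc] _]. destruct (Hc y) as [n Hn].
        apply (HUf (k, n)) in Hn. apply (HCf (k, n)) in Hn. destruct Hn as [m Hm].
        exists (to_nat (n, m)). unfold D. rewrite cancel_of_to. exact Hm. }
      destruct (psi_bound D g x Hle Hx) as [K HK].
      exists K. intros k Hk. specialize (HK k Hk).
      apply phi_le in HK. destruct HK as [j [Hj Dj]].
      exists (u k (fst (of_nat j))). split.
      * unfold F. apply (in_map (fun j => u k (fst (of_nat j)))). apply in_seq. lia.
      * unfold D in Dj. destruct (of_nat j) as [n m] eqn:E. simpl in *.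
        apply (HUf (k, n)). apply (HCf (k, n)). exists m; exact Dj.
Qed.

Lemma lmax {T} (u : nat -> (T -> Prop)) (l : list (T -> Prop)) :
  (forall W, In W l -> in_range u W) -> exists J, forall W, In W l -> exists j, j <= J /\ u j = W.
Proof.
  induction l as [|a l IH]; intros H.
  - exists 0; intros W [].
  - destruct IH as [J HJ]. { intros; apply H; right; auto. }
    destruct (H a (or_introl eq_refl)) as [j0 E0].
    exists (Nat.max J j0). intros W [E|HW].
    + subst. exists j0; split; auto; lia.
    + destruct (HJ W HW) as [j [Hj E]]. exists j; split; auto; lia.
Qed.

Fixpoint iter_seq (nx : nat -> nat) (i : nat) : nat :=
  match i with 0 => 0 | S i => nx (iter_seq nx i) end.

Lemma extract {T} (u : nat -> nat -> (T -> Prop)) (F : nat -> list (T -> Prop)) :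
  (forall k j j' y, j <= j' -> u k j y -> u k j' y) ->
  (forall k W, In W (F k) -> in_range (u k) W) ->
  point_cofinite_cover (fun W => exists k, W = union_list (F k)) ->
  exists s h : nat -> nat, (forall i, i <= s i) /\
    forall y, exists N, forall i, N <= i -> u (s i) (h i) y.
Proof.
  intros Hmono Hr [_ [Hinf Hpc]].
  set (TT := fun k => union_list (F k)).
  assert (Hnx : forall n, exists k', n < k' /\ ~ In (TT k') (map TT (seq 0 (S n)))).
  { intros n. apply NNPP. intros Hn. apply Hinf. exists (map TT (seq 0 (S n))).
    intros W [k Ek]. subst W. destruct (Nat.le_gt_cases k n).
    - apply (in_map TT). apply in_seq. lia.
    - apply NNPP. intro Hk. apply Hn. exists k. split; auto. }
  destruct (choice2 _ Hnx) as [nx Hnx'].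
  set (s := iter_seq nx).
  assert (Hs1 : forall i, s i < s (S i)). { intro i. simpl. apply Hnx'. }
  assert (Hs2 : forall i j, i <= j -> s i <= s j).
  { intros i j H. induction H; auto. specialize (Hs1 m). lia. }
  assert (Hs3 : forall i, i <= s i).
  { induction i; [lia|]. specialize (Hs1 i). lia. }
  assert (Hdist : forall i j, i < j -> TT (s i) <> TT (s j)).
  { intros i j Hij E. destruct j as [|j']; [lia|].
    destruct (Hnx' (s j')) as [_ Hn]. apply Hn. change (nx (s j')) with (s (S j')).
    rewrite <- E. apply (in_map TT). apply in_seq. specialize (Hs2 i j' ltac:(lia)). lia. }
  assert (Havoid : forall E : list (T -> Prop), exists N, forall i, N <= i -> ~ In (TT (s i)) E).
  { induction E as [|W E IH].
    - exists 0; intros i _ [].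
    - destruct IH as [N' HN'].
      destruct (classic (exists i0, TT (s i0) = W)) as [[i0 Ei0]|Hno].
      + exists (Nat.max N' (S i0)). intros i Hi [E1|E1].
        * subst W. apply (Hdist i0 i); auto. lia.
        * apply (HN' i); auto. lia.
      + exists N'. intros i Hi [E1|E1].
        * apply Hno; exists i; auto.
        * apply (HN' i); auto. }
  assert (HJ : forall k, exists J, forall W, In W (F k) -> exists j, j <= J /\ u k j = W).
  { intro k. apply lmax. apply Hr. }
  destruct (choice2 _ HJ) as [Jf HJf].
  exists s, (fun i => Jf (s i)). split; auto.
  intros y. destruct (Hpc y) as [E HE].
  destruct (Havoid E) as [N HN]. exists N. intros i Hi.
  assert (Hy : TT (s i) y).
  { apply NNPP; intro Hn. apply (HN i Hi). apply HE. split; auto. exists (s i); auto. }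
  destruct Hy as [W [HW Wy]]. destruct (HJf (s i) W HW) as [j [Hj Ej]]. subst W.
  eapply Hmono; eauto.
Qed.

Lemma w_prod_open m k j : prod_open (fun f => forall i, i <= k -> Nbar_le (f (m+i)) j).
Proof.
  intros f Hf. exists (map (fun i => (m+i, fun a => Nbar_le a j)) (seq 0 (S k))). split.
  - intros p Hp. apply in_map_iff in Hp. destruct Hp as [i [E Hi]]. subst p. simpl.
    apply in_seq in Hi. split.
    + intros H; simpl in H; contradiction.
    + apply Hf; lia.
  - intros g Hg i Hi. apply (Hg (m+i, fun a => Nbar_le a j)).
    apply (in_map (fun i => (m+i, fun a => Nbar_le a j))). apply in_seq. lia.
Qed.

Lemma forward_m (X : Type) (op : (X -> Prop) -> Prop) (Hh : hereditarily_Hurewicz op)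
  (Psi : X -> EF) (Hc : continuous op EF_open Psi) m :
  exists gm : nat -> nat, forall x, (forall n, m <= n -> proj1_sig (Psi x) n <> None) ->
    le_star (proj1_sig (Psi x)) gm.
Proof.
  set (Y := fun x => forall n, m <= n -> proj1_sig (Psi x) n <> None).
  set (w := fun k j (y : {x | Y x}) =>
        forall i, i <= k -> Nbar_le (proj1_sig (Psi (proj1_sig y)) (m+i)) j).
  assert (Hwo : forall k j, subspace_open op Y (w k j)).
  { intros k j. exists (fun x => forall i, i <= k -> Nbar_le (proj1_sig (Psi x) (m+i)) j).
    split; [|intro; unfold w; tauto].
    apply (Hc (fun e => forall i, i <= k -> Nbar_le (proj1_sig e (m+i)) j)).
    exists (fun f => forall i, i <= k -> Nbar_le (f (m+i)) j).
    split; [apply w_prod_open|intro; tauto]. }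
  assert (Hwj : forall k j j' y, j <= j' -> w k j y -> w k j' y).
  { intros k j j' y H1 H2 i Hi. apply (Nbar_le_mono _ j); auto. }
  assert (Hwk : forall k k' j y, k' <= k -> w k j y -> w k' j y).
  { intros k k' j y H1 H2 i Hi. apply H2. lia. }
  assert (Hwc : forall k y, exists j, w k j y).
  { intros k [x Hx]. unfold w; simpl. induction k.
    - destruct (proj1_sig (Psi x) (m+0)) as [n|] eqn:E.
      + exists n. intros i Hi. assert (i = 0) by lia. subst. rewrite E. simpl; lia.
      + exfalso. exact (Hx (m+0) ltac:(lia) E).
    - destruct IHk as [j Hj].
      destruct (proj1_sig (Psi x) (m+S k)) as [n|] eqn:E.
      + exists (Nat.max j n). intros i Hi. destruct (Nat.eq_dec i (S k)).
        * subst. rewrite E. simpl. lia.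
        * apply (Nbar_le_mono _ j); [lia|]. apply Hj. lia.
      + exfalso. exact (Hx (m+S k) ltac:(lia) E). }
  destruct (classic (exists k0, no_finite_subcover (w k0))) as [[k0 Hk0]|Hno].
  - set (u' := fun k => w (Nat.max k k0)).
    destruct (Hh Y u') as [F [HF1 HF2]].
    { intro k. split; [split|].
      - intro n; apply Hwo.
      - intro y. apply Hwc.
      - intros l Hl. destruct (lmax _ l Hl) as [J HJ].
        destruct (Hk0 [w k0 J]) as [y Hy].
        { intros W [E|[]]. subst W. exists J; auto. }
        exists y. intros W HW Wy. destruct (HJ W HW) as [j [Hj Ej]]. subst W.
        apply (Hy (w k0 J) (or_introl eq_refl)). apply (Hwj k0 j J); auto.
        apply (Hwk (Nat.max k k0) k0); auto; lia. }
    destruct (extract u' F (fun k j j' y H => Hwj _ j j' y H) HF1 HF2) as [s [h [Hs Hsh]]].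
    exists (fun n => h (n - m)). intros x Hx. destruct (Hsh (exist _ x Hx)) as [N HN].
    exists (m + N). intros n Hn. specialize (HN (n-m) ltac:(lia)). unfold u', w in HN; simpl in HN.
    specialize (Hs (n-m)).
    specialize (HN (n-m) ltac:(lia)). replace (m + (n-m)) with n in HN by lia. exact HN.
  - assert (H : forall k, exists J, forall y, w k J y).
    { intro k. assert (H : ~ no_finite_subcover (w k)) by (intro; apply Hno; eauto).
      unfold no_finite_subcover in H. apply not_all_ex_not in H. destruct H as [l Hl].
      apply imply_to_and in Hl. destruct Hl as [Hl1 Hl2].
      destruct (lmax _ l Hl1) as [J HJ]. exists J. intro y.
      apply NNPP; intro Hy. apply Hl2. exists y. intros W HW Wy.
      destruct (HJ W HW) as [j [Hj Ej]]. subst. apply Hy. eapply Hwj; eauto. }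
    destruct (choice2 _ H) as [c Hc'].
    exists (fun n => c (n - m)). intros x Hx. exists m. intros n Hn.
    specialize (Hc' (n-m) (exist _ x Hx) (n - m) (le_n _)). simpl in Hc'.
    replace (m + (n-m)) with n in Hc' by lia. exact Hc'.
Qed.

Lemma forward (X : Type) (op : (X -> Prop) -> Prop) :
  hereditarily_Hurewicz op ->
  (forall Psi : X -> EF, continuous op EF_open Psi ->
     bounded (fun f => exists x, Psi x = f)).
Proof.
  intros Hh Psi Hc.
  destruct (choice2 _ (forward_m X op Hh Psi Hc)) as [gm Hgm].
  exists (fun n => maxr (fun m => gm m n) n).
  intros f [x Ex]. subst f. destruct (proj2_sig (Psi x)) as [m0 Hm0].
  destruct (Hgm m0 x Hm0) as [N HN]. exists (Nat.max N m0). intros n Hn.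
  apply (Nbar_le_mono _ (gm m0 n)).
  - apply (maxr_ge (fun m => gm m n)). lia.
  - apply HN; lia.
Qed.

Theorem mainTheorem1 (X : Type) (op : (X -> Prop) -> Prop)
  (Htop : is_topology op) (Hclop : open_countable_union_clopen op) :
  hereditarily_Hurewicz op <->
  (forall Psi : X -> EF, continuous op EF_open Psi ->
     bounded (fun f => exists x, Psi x = f)).
Proof.
  split.
  - apply forward.
  - apply backward; auto.
Qed.
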